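(* Let $C\subset\mathbb{R}^d$ be an open convex set and let $f,g:C\to[0,\infty)$ be DC functions on $C$ such that $0$ is a weakly regular value of both $f$ and $g$. If $f$ and $g$ do not touch weakly, then $f+g$ is a DC function on $C$ with $0$ as a weakly regular value.
   Context: A real function on an open convex set is DC if it is a difference of two convex functions. $\partial f(x)$ is the Clarke subgradient. A number $c$ is a weakly regular value of a locally Lipschitz $f$ if whenever $x_i\to x$, $f(x_i)>c=f(x)$ and $u_i\in\partial f(x_i)$, then $\liminf_i|u_i|>0$. For such $f$ on $C$ define $\widetilde{\mathrm{nor}}\,f:=\{(x,u/|u|):x\in C,\ f(x)=0,\ 0\ne u\in\partial f(x)\}$. Two such functions $f,g$ on $C$ touch weakly if there exists $(x,v)\in\widetilde{\mathrm{nor}}\,f$ with $(x,-v)\in\widetilde{\mathrm{nor}}\,g$. *)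

(* Defs.v *)
From HB Require Import structures.
From mathcomp Require Import all_boot all_order all_algebra.
From mathcomp Require Import reals.
Set Implicit Arguments. Unset Strict Implicit. Unset Printing Implicit Defensive.
Import Order.TTheory GRing.Theory Num.Theory.
Local Open Scope ring_scope.

Section Defs.
Variables (R : realType) (d : nat).
Notation V := 'rV[R]_d.

Definition dotv (u v : V) : R := \sum_(i < d) u 0 i * v 0 i.
Definition enorm (u : V) : R := Num.sqrt (dotv u u).

Definition is_open (C : V -> Prop) : Prop :=
  forall x, C x -> exists2 e : R, 0 < e & forall y, enorm (y - x) < e -> C y.

Definition is_convex (C : V -> Prop) : Prop :=
  forall x y (t : R), C x -> C y -> 0 <= t -> t <= 1 -> C (t *: x + (1 - t) *: y).

Definition convex_on (C : V -> Prop) (f : V -> R) : Prop :=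
  forall x y (t : R), C x -> C y -> 0 <= t -> t <= 1 ->
    f (t *: x + (1 - t) *: y) <= t * f x + (1 - t) * f y.

Definition DC (C : V -> Prop) (f : V -> R) : Prop :=
  exists g h : V -> R, [/\ convex_on C g, convex_on C h &
                          forall x, C x -> f x = g x - h x].

(* Clarke subgradient, defined via the Clarke directional derivative
     f°(x;v) = limsup_{y -> x, t -> 0+} (f (y + t v) - f y) / t,
   namely  u \in ∂f(x)  iff  <u,v> <= f°(x;v) for all v.
   "<u,v> <= limsup" is written out: for every eps > 0 and every
   delta > 0 the difference quotient exceeds <u,v> - eps at some
   (y,t) with |y - x| < delta and 0 < t < delta (y, y + t v in C). *)
Definition clarke_subdiff (C : V -> Prop) (f : V -> R) (x u : V) : Prop :=
  C x /\
  forall v : V, forall eps delta : R, 0 < eps -> 0 < delta ->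
    exists y : V, exists t : R,
      [/\ C y /\ C (y + t *: v), enorm (y - x) < delta, 0 < t, t < delta &
          dotv u v - eps < (f (y + t *: v) - f y) / t].

Definition cvg_to (xs : nat -> V) (x : V) : Prop :=
  forall e : R, 0 < e -> exists N, forall i, (N <= i)%N -> enorm (xs i - x) < e.

Definition liminf_pos (r : nat -> R) : Prop :=
  exists2 m : R, 0 < m & exists N, forall i, (N <= i)%N -> m <= r i.

Definition weakly_regular_value (C : V -> Prop) (f : V -> R) (c : R) : Prop :=
  forall (xs : nat -> V) (x : V) (us : nat -> V),
    C x -> (forall i, C (xs i)) -> cvg_to xs x ->
    (forall i, c < f (xs i)) -> f x = c ->
    (forall i, clarke_subdiff C f (xs i) (us i)) ->
    liminf_pos (fun i => enorm (us i)).

Definition wnor (C : V -> Prop) (f : V -> R) (x v : V) : Prop :=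
  C x /\ f x = 0 /\
  exists u : V, [/\ u != 0, clarke_subdiff C f x u & v = (enorm u)^-1 *: u].

Definition touch_weakly (C : V -> Prop) (f g : V -> R) : Prop :=
  exists x v : V, wnor C f x v /\ wnor C g x (- v).

End Defs.

(* Main.v *)
Require Import Defs.
From HB Require Import structures.
From mathcomp Require Import all_boot all_order all_algebra.
From mathcomp Require Import reals classical_sets boolp topology normedtype.
From mathcomp Require Import ring lra.
Import Order.TTheory GRing.Theory Num.Theory.
Import numFieldNormedType.Exports.
Local Open Scope ring_scope.
Local Open Scope classical_set_scope.

Section Basics.
Variables (R : realType) (d : nat).
Notation V := 'rV[R]_d.
Definition Dc : R := d.+1%:R.
Notation D := Dc.
Lemma D_gt0 : 0 < D. Proof. by rewrite /Dc ltr0n. Qed.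
Lemma D_ge1 : 1 <= D. Proof. by rewrite /Dc ler1n. Qed.
Lemma D_neq0 : D != 0. Proof. exact: lt0r_neq0 D_gt0. Qed.

Lemma coord_le_norm (v : V) i : `|v 0 i| <= `|v|.
Proof. rewrite [leRHS]/Num.Def.normr /= mx_normrE; apply/bigmax_geP; right => /=; by exists (0, i). Qed.

Lemma norm_le_coord (v : V) M : 0 <= M -> (forall i, `|v 0 i| <= M) -> `|v| <= M.
Proof.
move=> M0 H; rewrite [leLHS]/Num.Def.normr/= mx_normrE; apply: bigmax_le => //= -[i j] _ /=.
by rewrite (ord1 i); exact: H.
Qed.

Lemma dotvDl (u w v : V) : dotv (u + w) v = dotv u v + dotv w v.
Proof. by rewrite /dotv -big_split; apply: eq_bigr => i _; rewrite mxE mulrDl. Qed.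
Lemma dotvZl (c : R) (u v : V) : dotv (c *: u) v = c * dotv u v.
Proof. by rewrite /dotv mulr_sumr; apply: eq_bigr => i _; rewrite mxE mulrA. Qed.
Lemma dotvNl (u v : V) : dotv (- u) v = - dotv u v.
Proof. by rewrite -scaleN1r dotvZl mulN1r. Qed.
Lemma dotvBl (u w v : V) : dotv (u - w) v = dotv u v - dotv w v.
Proof. by rewrite dotvDl dotvNl. Qed.
Lemma dotvC (u v : V) : dotv u v = dotv v u.
Proof. by rewrite /dotv; apply: eq_bigr => i _; rewrite mulrC. Qed.
Lemma dotvDr (u w v : V) : dotv v (u + w) = dotv v u + dotv v w.
Proof. by rewrite dotvC dotvDl !(dotvC v). Qed.
Lemma dotvZr (c : R) (u v : V) : dotv v (c *: u) = c * dotv v u.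
Proof. by rewrite dotvC dotvZl dotvC. Qed.
Lemma dotvNr (u v : V) : dotv v (- u) = - dotv v u.
Proof. by rewrite dotvC dotvNl dotvC. Qed.
Lemma dotv0l (v : V) : dotv 0 v = 0.
Proof. by rewrite /dotv big1 // => i _; rewrite mxE mul0r. Qed.
Lemma dotv0r (v : V) : dotv v 0 = 0.
Proof. by rewrite dotvC dotv0l. Qed.

Lemma dotv_delta (u : V) k : dotv u (delta_mx 0 k) = u 0 k.
Proof.
rewrite /dotv (bigD1 k) //= big1 ?addr0.
  by rewrite mxE !eqxx /= mulr1.
by move=> i /negbTE ik; rewrite mxE ik andbF mulr0.
Qed.

Lemma norm_delta k : `|delta_mx 0 k : V| <= 1.
Proof.
apply: norm_le_coord => // i; rewrite mxE eqxx /=.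
by case: (i == k); rewrite ?normr1 ?normr0.
Qed.

Lemma dotv_bound (u v : V) : `|dotv u v| <= D * (`|u| * `|v|).
Proof.
rewrite /Dc.
rewrite /dotv; apply: (le_trans (ler_norm_sum _ _ _)).
apply: (@le_trans _ _ (\sum_(i < d) (`|u| * `|v|))).
  apply: ler_sum => i _; rewrite normrM; apply: ler_pM => //; exact: coord_le_norm.
rewrite sumr_const card_ord -[X in X <= _]mulr_natl; apply: ler_wpM2r.
  by apply: mulr_ge0.
by rewrite ler_nat.
Qed.

Lemma dotvv_ge0 (v : V) : 0 <= dotv v v.
Proof. by apply: sumr_ge0 => i _; rewrite -expr2 sqr_ge0. Qed.

Lemma enorm_ge0 (v : V) : 0 <= enorm v.
Proof. exact: sqrtr_ge0. Qed.

Lemma enormN (v : V) : enorm (- v) = enorm v.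
Proof. by rewrite /enorm dotvNl dotvNr opprK. Qed.

Lemma norm_le_enorm (v : V) : `|v| <= enorm v.
Proof.
apply: norm_le_coord; first exact: enorm_ge0.
move=> i; rewrite -sqrtr_sqr /enorm ler_sqrt; last exact: dotvv_ge0.
rewrite /dotv (bigD1 i) //= -expr2 lerDl; apply: sumr_ge0 => j _.
by rewrite -expr2 sqr_ge0.
Qed.

Lemma enorm_le_norm (v : V) : enorm v <= D * `|v|.
Proof.
rewrite /Dc.
have n0 : 0 <= `|v| by [].
rewrite -[leRHS]ger0_norm ?mulr_ge0 // -sqrtr_sqr /enorm ler_sqrt; last first.
  by rewrite sqr_ge0.
apply: (@le_trans _ _ (\sum_(i < d) (`|v| ^+ 2))).
  apply: ler_sum => i _; rewrite -expr2 -real_normK ?num_real //.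
  by rewrite lerXn2r // ?nnegrE // coord_le_norm.
rewrite sumr_const card_ord exprMn -[X in X <= _]mulr_natl.
apply: ler_wpM2r; first exact: sqr_ge0.
rewrite -natrX ler_nat; apply: (@leq_trans d.+1) => //.
by rewrite expnS leq_pmulr.
Qed.



Definition LipAt (C : V -> Prop) (F : V -> R) (y : V) (r L : R) :=
  [/\ 0 < r, 0 <= L, (forall z, `|z - y| < r -> C z) &
      (forall z w, `|z - y| < r -> `|w - y| < r -> `|F z - F w| <= L * `|z - w|)].

Lemma LipAt_shrink C F y r r' L : LipAt C F y r L -> 0 < r' -> r' <= r -> LipAt C F y r' L.
Proof.
case=> r0 L0 HC HL r'0 r'r; split => //.
  by move=> z zy; apply: HC; apply: lt_le_trans r'r.
by move=> z w zy wy; apply: HL; apply: lt_le_trans r'r.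
Qed.

Lemma LipAt_shift C F x y r L : LipAt C F x r L -> `|y - x| < r / 2 ->
  LipAt C F y (r / 2) L.
Proof.
case=> r0 L0 HC HL yx.
have tri z : `|z - y| < r / 2 -> `|z - x| < r.
  move=> zy; rewrite -(subrKA y) (le_lt_trans (ler_normD _ _)) //.
  by rewrite [r](splitr r) ltrD.
split => //; first by rewrite divr_gt0.
  by move=> z /tri; apply: HC.
by move=> z w /tri zx /tri wx; apply: HL.
Qed.

Lemma open_cube (C : V -> Prop) x : is_open C -> C x ->
  exists2 R0 : R, 0 < R0 & forall z, `|z - x| <= R0 -> C z.
Proof.
move=> /(_ x) Ho /Ho [e e0 He]; exists (e / (2 * D)).
  by rewrite divr_gt0 // mulr_gt0 // D_gt0.
move=> z zx; apply: He; apply: (le_lt_trans (enorm_le_norm _)).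
have D0 := D_gt0.
have h1 : D * `|z - x| <= D * (e / (2 * D)) by apply: ler_wpM2l => //; apply: ltW.
have h2 : D * (e / (2 * D)) = e / 2.
  by field; rewrite nat1r pnatr_eq0.
rewrite h2 in h1; lra.
Qed.

Section ConvexLip.
Variables (C : V -> Prop) (h : V -> R) (x : V) (R0 : R).
Hypothesis R0pos : 0 < R0.
Hypothesis HC : forall z, `|z - x| <= R0 -> C z.
Hypothesis hconv : convex_on C h.

Definition vert (b : {ffun 'I_d -> bool}) : V :=
  x + \row_i (if b i then R0 else - R0).
Definition Mup := \big[Num.max/h x]_(b : {ffun 'I_d -> bool}) h (vert b).

Lemma cube_upper_k k : forall z, `|z - x| <= R0 ->
  (forall i : 'I_d, (k <= i)%N -> `|z 0 i - x 0 i| = R0) -> h z <= Mup.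
Proof.
elim: k => [|k IH] z zx Hz.
  pose b := [ffun i => x 0 i < z 0 i].
  have -> : z = vert b.
    apply/rowP => i; rewrite !mxE ffunE.
    have := Hz i (leq0n _); case: ifP => xz nz.
      by rewrite ger0_norm ?subr_ge0 ?ltW // in nz; lra.
    move/negbT: xz; rewrite -leNgt -subr_le0 => xz.
    by rewrite ler0_norm // in nz; lra.
  exact: (le_bigmax _ (fun b => h (vert b)) b).
case: (ltnP k d) => kd; last first.
  apply: IH => // i ki; exfalso; move: (ltn_ord i); rewrite ltnNge.
  by rewrite (leq_trans kd ki).
pose kk : 'I_d := Ordinal kd.
pose zp := z + (x 0 kk + R0 - z 0 kk) *: delta_mx 0 kk.
pose zm := z + (x 0 kk - R0 - z 0 kk) *: delta_mx 0 kk.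
have coordz i : `|z 0 i - x 0 i| <= R0.
  by apply: le_trans zx; have := coord_le_norm (z - x) i; rewrite !mxE.
have ezp i : zp 0 i = if i == kk then x 0 kk + R0 else z 0 i.
  rewrite !mxE eqxx /=; case: eqP => [->|_]; first by rewrite mulr1 addrC subrK.
  by rewrite mulr0 addr0.
have ezm i : zm 0 i = if i == kk then x 0 kk - R0 else z 0 i.
  rewrite !mxE eqxx /=; case: eqP => [->|_]; first by rewrite mulr1 addrC subrK.
  by rewrite mulr0 addr0.
have R0ge := ltW R0pos.
have zpx : `|zp - x| <= R0.
  apply: norm_le_coord => // i.
  have -> : (zp - x) 0 i = zp 0 i - x 0 i by rewrite !mxE.
  rewrite ezp.
  case: eqP => [->|_]; last by [].
  by rewrite addrC addKr ger0_norm.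
have zmx : `|zm - x| <= R0.
  apply: norm_le_coord => // i.
  have -> : (zm - x) 0 i = zm 0 i - x 0 i by rewrite !mxE.
  rewrite ezm.
  case: eqP => [->|_]; last by [].
  by rewrite addrC addKr normrN ger0_norm.
have hzp : h zp <= Mup.
  apply: IH => // i ki; rewrite ezp; case: eqP => [->|/eqP ik].
    by rewrite addrC addKr ger0_norm.
  apply: Hz; rewrite ltn_neqAle ki andbT; apply/eqP => ki'; move/eqP: ik; apply.
  by apply: val_inj; rewrite /= -ki'.
have hzm : h zm <= Mup.
  apply: IH => // i ki; rewrite ezm; case: eqP => [->|/eqP ik].
    by rewrite addrC addKr normrN ger0_norm.
  apply: Hz; rewrite ltn_neqAle ki andbT; apply/eqP => ki'; move/eqP: ik; apply.
  by apply: val_inj; rewrite /= -ki'.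
pose lam := (z 0 kk - x 0 kk + R0) / (2 * R0).
have ckk := coordz kk; rewrite ler_norml in ckk; case/andP: ckk => ck1 ck2.
have lam0 : 0 <= lam by rewrite divr_ge0 //; lra.
have lam1 : lam <= 1 by rewrite ler_pdivrMr ?mulr_gt0 //; lra.
have -> : z = lam *: zp + (1 - lam) *: zm.
  apply/rowP => i.
  have -> : (lam *: zp + (1 - lam) *: zm) 0 i = lam * zp 0 i + (1 - lam) * zm 0 i by rewrite !mxE.
  rewrite ezp ezm.
  case: eqP => [->|_]; last by ring.
  by rewrite /lam; field; exact: lt0r_neq0.
apply: (le_trans (hconv _ _ _ (HC _ zpx) (HC _ zmx) lam0 lam1)).
have -> : Mup = lam * Mup + (1 - lam) * Mup by ring.
by apply: lerD; apply: ler_wpM2l => //; lra.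
Qed.

Lemma cube_upper z : `|z - x| <= R0 -> h z <= Mup.
Proof.
move=> zx; apply: (@cube_upper_k d) => // i di; exfalso.
by move: (ltn_ord i); rewrite ltnNge di.
Qed.

Definition Kb := `|Mup| + `|2 * h x - Mup|.

Lemma cube_abs z : `|z - x| <= R0 -> `|h z| <= Kb.
Proof.
move=> zx; have up := cube_upper _ zx.
pose z' := x + (x - z).
have z'x : `|z' - x| <= R0 by rewrite /z' addrC addKr distrC.
have up' := cube_upper _ z'x.
have hx : h x <= 2^-1 * h z + (1 - 2^-1) * h z'.
  have -> : x = 2^-1 *: z + (1 - 2^-1) *: z'.
    by apply/rowP => i; rewrite !mxE; field.
  apply: hconv; [exact: HC | exact: HC | |]; lra.
rewrite ler_norml /Kb; have := ler_norm Mup; have := ler_norm (2 * h x - Mup).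
have := ler_norm (- (2 * h x - Mup)); rewrite normrN.
have := ler_norm (- Mup); rewrite normrN.
move=> *; apply/andP; split; lra.
Qed.

Lemma convex_LipAt : exists L, LipAt C h x (R0 / 2) L.
Proof.
have R0p := R0pos.
have r0 : 0 < R0 / 2 by rewrite divr_gt0.
have K0 : 0 <= Kb by rewrite /Kb addr_ge0.
exists (2 * Kb / (R0 / 2)); split => //.
  by apply: divr_ge0; [apply: mulr_ge0 | lra].
  move=> z zx; apply: HC; lra.
suff H : forall z w, `|z - x| < R0 / 2 -> `|w - x| < R0 / 2 ->
    h z - h w <= 2 * Kb / (R0 / 2) * `|z - w|.
  move=> z w zx wx; rewrite ler_norml; apply/andP; split; last exact: H.
  by rewrite lerNl opprB distrC; apply: H.
move=> z w zx wx.
have [zw|zw] := eqVneq z w; first by rewrite zw !subrr normr0 mulr0.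
set r := R0 / 2 in r0 zx wx *.
set D0 := `|z - w|.
have D00 : 0 < D0 by rewrite normr_gt0 subr_eq0.
pose w' := z + (r / D0) *: (z - w).
have w'x : `|w' - x| <= R0.
  rewrite /w' addrAC (le_trans (ler_normD _ _)) // normrZ gtr0_norm ?divr_gt0 //.
  rewrite -/D0 mulfVK ?gt_eqF //; rewrite /r in zx *; lra.
have zxR : `|z - x| <= R0 by apply: ltW; apply: (lt_trans zx); rewrite /r; have := R0pos; lra.
have wxR : `|w - x| <= R0 by apply: ltW; apply: (lt_trans wx); rewrite /r; lra.
pose beta := D0 / (D0 + r).
have b0 : 0 <= beta by rewrite divr_ge0 //; lra.
have b1 : beta <= 1 by rewrite ler_pdivrMr; lra.
have ez : z = beta *: w' + (1 - beta) *: w.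
  apply/rowP => i; rewrite !mxE /beta; field; apply/andP; split; apply: lt0r_neq0; lra.
have hc : h z <= beta * h w' + (1 - beta) * h w.
  by rewrite {1}ez; apply: hconv => //; apply: HC.
have := cube_abs _ w'x; have := cube_abs _ wxR; rewrite !ler_norml => /andP[a1 a2] /andP[a3 a4].
have bD : beta <= D0 / r.
  rewrite /beta; apply: ler_wpM2l; [lra | rewrite lef_pV2 ?posrE; lra].
apply: (@le_trans _ _ (beta * (2 * Kb))).
  have : beta * (h w' - h w) <= beta * (2 * Kb) by apply: ler_wpM2l => //; lra.
  lra.
apply: (@le_trans _ _ (D0 / r * (2 * Kb))).
  by apply: ler_wpM2r => //; rewrite mulr_ge0.
rewrite [X in _ <= X](_ : _ = D0 / r * (2 * Kb)) //.
rewrite /r; ring.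
Qed.

End ConvexLip.

Lemma convex_lip (C : V -> Prop) h x : is_open C -> convex_on C h -> C x ->
  exists r L, LipAt C h x r L.
Proof.
move=> Co hc Cx; have [R0 R0p HC] := open_cube _ _ Co Cx.
have [L HL] := convex_LipAt _ _ _ _ R0p HC hc; by exists (R0 / 2), L.
Qed.

Lemma DC_lip (C : V -> Prop) F x : is_open C -> DC C F -> C x -> exists r L, LipAt C F x r L.
Proof.
move=> Co [g [h [gc hc Fe]]] Cx.
have [r1 [L1 [r10 L10 HC1 HL1]]] := convex_lip _ _ _ Co gc Cx.
have [r2 [L2 HL2]] := convex_lip _ _ _ Co hc Cx.
have m0 : 0 < Num.min r1 r2 by rewrite lt_min r10; case: HL2.
have mr2 : Num.min r1 r2 <= r2 by rewrite ge_min lexx orbT.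
have [_ L20 _ HL2'] := LipAt_shrink _ _ _ _ _ _ HL2 m0 mr2.
exists (Num.min r1 r2), (L1 + L2); split => //.
  by rewrite addr_ge0.
  by move=> z; rewrite lt_min => /andP[/HC1].
move=> z w; rewrite !lt_min => /andP[z1 z2] /andP[w1 w2].
rewrite !Fe //; try exact: HC1.
have -> : g z - h z - (g w - h w) = (g z - g w) - (h z - h w) by ring.
apply: (le_trans (ler_normB _ _)); rewrite mulrDl lerD //.
  exact: HL1.
by apply: HL2'; rewrite lt_min ?z1 ?z2 ?w1 ?w2.
Qed.


Definition Qset (C : V -> Prop) (F : V -> R) (y v : V) (del : R) : set R :=
  [set q | exists z, exists t, [/\ C z /\ C (z + t *: v), `|z - y| < del, 0 < t,
     t < del & q = (F (z + t *: v) - F z) / t]].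
Definition rho (r : R) (v : V) := r / (2 * (1 + `|v|)).
Definition Ssup C F y v del := sup (Qset C F y v del).
Definition Dset C F y r v : set R :=
  [set s | exists del, [/\ 0 < del, del <= rho r v & s = Ssup C F y v del]].
Definition fo C F y r v := inf (Dset C F y r v).

Section Clarke.
Context {C : V -> Prop} {F : V -> R} {y : V} {r L : R}.
Hypothesis HL : LipAt C F y r L.

Lemma rho_pos v : 0 < rho r v.
Proof. by case: HL => r0 *; rewrite divr_gt0 // mulr_gt0 // ltr_pwDl. Qed.

Lemma rho_le v : (1 + `|v|) * rho r v = r / 2.
Proof.
case: HL => r0 *; rewrite /rho; field.
by rewrite lt0r_neq0 // ltr_pwDl.
Qed.

Lemma in_ball {v del z t} : del <= rho r v -> `|z - y| < del -> 0 < t -> t < del ->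
  `|z - y| < r /\ `|z + t *: v - y| < r.
Proof.
move=> dr zy t0 td; have [r0 _ _ _] := HL.
have := rho_le v; have nv := normr_ge0 v.
have H1 : `|z + t *: v - y| <= `|z - y| + t * `|v|.
  by rewrite addrAC (le_trans (ler_normD _ _)) // normrZ gtr0_norm.
have H2 : t * `|v| <= del * `|v| by apply: ler_wpM2r => //; apply: ltW.
have H3 : (1 + `|v|) * del <= (1 + `|v|) * rho r v by apply: ler_wpM2l => //; lra.
move=> e; split; nra.
Qed.

Lemma Q_bound {v del q} : del <= rho r v -> Qset C F y v del q -> `|q| <= L * `|v|.
Proof.
move=> dr [z [t [[Cz Czt] zy t0 td ->]]].
have [zr ztr] := in_ball dr zy t0 td.
case: HL => _ L0 _ HLi.
rewrite normrM normfV (gtr0_norm t0) ler_pdivrMr //.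
apply: (le_trans (HLi _ _ ztr zr)).
by rewrite [z + _]addrC addrK normrZ (gtr0_norm t0) [t * _]mulrC mulrA.
Qed.

Lemma Q_ne {v del} : 0 < del -> del <= rho r v -> Qset C F y v del !=set0.
Proof.
move=> d0 dr; have [r0 _ HCi _] := HL.
have t0 : 0 < del / 2 by rewrite divr_gt0.
have td : del / 2 < del by lra.
have yy : `|y - y| < del by rewrite subrr normr0.
have [yr ytr] := in_ball dr yy t0 td.
by eexists; exists y, (del / 2); split; [split; apply: HCi | | | |].
Qed.

Lemma Q_has_sup {v del} : 0 < del -> del <= rho r v -> has_sup (Qset C F y v del).
Proof.
move=> d0 dr; split; first exact: Q_ne.
exists (L * `|v|) => q Hq; have := Q_bound dr Hq; rewrite ler_norml => /andP[].
by [].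
Qed.

Lemma S_ub {v del q} : 0 < del -> del <= rho r v -> Qset C F y v del q -> q <= Ssup C F y v del.
Proof. by move=> d0 dr Hq; apply: sup_upper_bound => //; apply: Q_has_sup. Qed.

Lemma S_le {v del} : 0 < del -> del <= rho r v -> Ssup C F y v del <= L * `|v|.
Proof.
move=> d0 dr; apply: ge_sup; first exact: Q_ne.
by move=> q Hq; have := Q_bound dr Hq; rewrite ler_norml => /andP[].
Qed.

Lemma S_ge {v del} : 0 < del -> del <= rho r v -> - (L * `|v|) <= Ssup C F y v del.
Proof.
move=> d0 dr; have [q Hq] := Q_ne d0 dr.
apply: le_trans (S_ub d0 dr Hq).
by have := Q_bound dr Hq; rewrite ler_norml => /andP[].
Qed.

Lemma S_adh {v del eps} : 0 < del -> del <= rho r v -> 0 < eps ->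
  exists2 q, Qset C F y v del q & Ssup C F y v del - eps < q.
Proof. by move=> d0 dr e0; apply: sup_adherent => //; apply: Q_has_sup. Qed.

Lemma S_mono {v d1 d2} : 0 < d1 -> d1 <= d2 -> d2 <= rho r v ->
  Ssup C F y v d1 <= Ssup C F y v d2.
Proof.
move=> d10 d12 d2r; have d20 : 0 < d2 by apply: lt_le_trans d12.
apply: ge_sup; first by apply: Q_ne => //; apply: le_trans d2r.
move=> q [z [t [Cz zy t0 td ->]]]; apply: S_ub => //.
exists z, t; split => //; [apply: lt_le_trans zy d12 | apply: lt_le_trans td d12].
Qed.

Lemma D_ne v : Dset C F y r v !=set0.
Proof. by exists (Ssup C F y v (rho r v)), (rho r v); split => //; apply: rho_pos. Qed.

Lemma D_lb v : lbound (Dset C F y r v) (- (L * `|v|)).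
Proof. by move=> s [del [d0 dr ->]]; apply: S_ge. Qed.

Lemma fo_le {v del} : 0 < del -> del <= rho r v -> fo C F y r v <= Ssup C F y v del.
Proof.
move=> d0 dr; apply: ge_inf; first by exists (- (L * `|v|)); apply: D_lb.
by exists del.
Qed.

Lemma fo_adh v {eps} : 0 < eps -> exists del, [/\ 0 < del, del <= rho r v &
  Ssup C F y v del < fo C F y r v + eps].
Proof.
move=> e0; have [s [del [d0 dr ->]] H] := inf_adherent e0 (conj (D_ne v)
   (ex_intro _ _ (D_lb v))).
by exists del.
Qed.

Lemma fo_lb v : - (L * `|v|) <= fo C F y r v.
Proof. apply: lb_le_inf; [exact: D_ne | exact: D_lb]. Qed.

Lemma fo_ub v : fo C F y r v <= L * `|v|.
Proof. apply: (le_trans (fo_le (rho_pos v) (lexx _))); exact: S_le (rho_pos v) (lexx _). Qed.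

Lemma char1 u v : clarke_subdiff C F y u -> dotv u v <= fo C F y r v.
Proof.
move=> [Cy Hu]; apply: lb_le_inf; first exact: D_ne.
move=> s [del [d0 dr ->]]; apply/ler_addgt0Pr => e e0.
have [z [t [[Cz Czt] zy t0 td Hq]]] := Hu v e del e0 d0.
have Q : Qset C F y v del ((F (z + t *: v) - F z) / t).
  exists z, t; split => //; apply: le_lt_trans zy; exact: norm_le_enorm.
have := S_ub d0 dr Q; lra.
Qed.

Lemma char2 u : C y -> (forall v, dotv u v <= fo C F y r v) -> clarke_subdiff C F y u.
Proof.
move=> Cy Hu; split => // v eps del e0 d0.
pose d' := Num.min (del / D) (rho r v).
have D0 := D_gt0.
have d'0 : 0 < d' by rewrite lt_min divr_gt0 // rho_pos.
have d'r : d' <= rho r v by rewrite ge_min lexx orbT.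
have d'd : d' <= del / D by rewrite ge_min lexx.
have [q [z [t [[Cz Czt] zy t0 td ->]]] Hq] := S_adh d'0 d'r e0.
have := fo_le d'0 d'r; have := Hu v => H1 H2.
exists z, t; split => //.
- apply: (le_lt_trans (enorm_le_norm _)).
  have : D * `|z - y| < D * d' by rewrite ltr_pM2l.
  have : D * d' <= D * (del / D) by rewrite ler_pM2l.
  rewrite mulrCA mulfV ?gt_eqF // mulr1; lra.
- have : del / D <= del by rewrite ler_pdivrMr // ler_peMr ?D_ge1 //; apply: ltW.
  move=> H3; exact: (lt_le_trans td (le_trans d'd H3)).
- lra.
Qed.

Lemma fo_subadd v w : fo C F y r (v + w) <= fo C F y r v + fo C F y r w.
Proof.
apply/ler_addgt0Pr => e e0.
have e20 : 0 < e / 2 by rewrite divr_gt0.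
have [d1 [d10 d1r H1]] := fo_adh v e20.
have [d2 [d20 d2r H2]] := fo_adh w e20.
have nw := normr_ge0 w.
have w1 : 0 < 1 + `|w| by lra.
pose del := Num.min (Num.min d1 d2 / (1 + `|w|)) (rho r (v + w)).
have m0 : 0 < Num.min d1 d2 by rewrite lt_min d10 d20.
have dl0 : 0 < del by rewrite lt_min divr_gt0 // rho_pos.
have dlr : del <= rho r (v + w) by rewrite ge_min lexx orbT.
have dlm : del * (1 + `|w|) <= Num.min d1 d2.
  rewrite -ler_pdivlMr // ge_min lexx //.
have m1 : Num.min d1 d2 <= d1 by rewrite ge_min lexx.
have m2 : Num.min d1 d2 <= d2 by rewrite ge_min lexx orbT.
have dl1 : del <= del * (1 + `|w|) by rewrite ler_peMr //; [apply: ltW | lra].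
have [_ _ HCi _] := HL.
have S : Ssup C F y (v + w) del <= Ssup C F y v d1 + Ssup C F y w d2.
  apply: ge_sup; first exact: Q_ne.
  move=> q [z [t [[Cz Czt] zy t0 td ->]]].
  pose z' := z + t *: w.
  have zyd2 : `|z - y| < d2 by lra.
  have td2 : t < d2 by lra.
  have [_ Cz'r] := in_ball d2r zyd2 t0 td2.
  have ez : z + t *: (v + w) = z' + t *: v by rewrite /z' scalerDr addrAC addrA.
  have Qw : Qset C F y w d2 ((F z' - F z) / t).
    by exists z, t; split => //; split => //; apply: HCi.
  have z'y : `|z' - y| < d1.
    rewrite /z' addrAC (le_lt_trans (ler_normD _ _)) // normrZ gtr0_norm //.
    have : t * `|w| <= del * `|w| by apply: ler_wpM2r => //; apply: ltW.
    lra.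
  have Qv : Qset C F y v d1 ((F (z' + t *: v) - F z') / t).
    exists z', t; split => //; last lra.
    by split; [apply: HCi | rewrite -ez].
  have := S_ub d10 d1r Qv; have := S_ub d20 d2r Qw.
  rewrite ez; have -> : (F (z' + t *: v) - F z) / t =
     (F (z' + t *: v) - F z') / t + (F z' - F z) / t by field; apply: lt0r_neq0.
  lra.
have := fo_le dl0 dlr; lra.
Qed.

Lemma fo_homog lam v : 0 < lam -> lam * fo C F y r v <= fo C F y r (lam *: v).
Proof.
move=> l0; apply: lb_le_inf; first exact: D_ne.
move=> s [del [d0 dr ->]].
pose d' := Num.min (Num.min del (lam * del)) (rho r v).
have d'0 : 0 < d' by rewrite !lt_min d0 mulr_gt0 // rho_pos.
have d'r : d' <= rho r v by rewrite ge_min lexx orbT.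
have d'1 : d' <= del by rewrite !ge_min lexx.
have d'2 : d' <= lam * del by rewrite !ge_min lexx orbT.
apply: (@le_trans _ _ (lam * Ssup C F y v d')).
  by rewrite ler_pM2l //; apply: fo_le.
apply/ler_addgt0Pr => e e0.
have el0 : 0 < e / lam by rewrite divr_gt0.
have [q [z [t [Cz zy t0 td ->]]] Hq] := S_adh d'0 d'r el0.
have Q : Qset C F y (lam *: v) del (lam * ((F (z + t *: v) - F z) / t)).
  exists z, (t / lam); split.
  - by rewrite scalerA mulfVK ?gt_eqF.
  - exact: lt_le_trans zy d'1.
  - by rewrite divr_gt0.
  - by rewrite ltr_pdivrMr // mulrC; apply: lt_le_trans td d'2.
  - by rewrite scalerA mulfVK ?gt_eqF //; field; apply/andP; split; apply: lt0r_neq0.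
have H := S_ub d0 dr Q.
have H2 : lam * (Ssup C F y v d' - e / lam) < lam * ((F (z + t *: v) - F z) / t).
  by rewrite ltr_pM2l.
have H3 : lam * (Ssup C F y v d' - e / lam) = lam * Ssup C F y v d' - e.
  by field; apply: lt0r_neq0.
lra.
Qed.

End Clarke.

Lemma sum_rule C F G y r L1 L2 u : LipAt C F y r L1 -> LipAt C G y r L2 ->
  clarke_subdiff C (fun x => F x + G x) y u ->
  forall v, dotv u v <= fo C F y r v + fo C G y r v.
Proof.
move=> HF HG [Cy Hu] v; apply/ler_addgt0Pr => e e0.
have e30 : 0 < e / 3 by rewrite divr_gt0.
have [d1 [d10 d1r H1]] := fo_adh HF v e30.
have [d2 [d20 d2r H2]] := fo_adh HG v e30.
pose del := Num.min d1 d2.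
have dl0 : 0 < del by rewrite lt_min d10 d20.
have m1 : del <= d1 by rewrite ge_min lexx.
have m2 : del <= d2 by rewrite ge_min lexx orbT.
have [z [t [[Cz Czt] zy t0 td Hq]]] := Hu v (e / 3) del e30 dl0.
have zy' : `|z - y| < del by apply: le_lt_trans (norm_le_enorm _) zy.
have QF : Qset C F y v d1 ((F (z + t *: v) - F z) / t).
  exists z, t; split => //; lra.
have QG : Qset C G y v d2 ((G (z + t *: v) - G z) / t).
  exists z, t; split => //; lra.
have := S_ub HF d10 d1r QF; have := S_ub HG d20 d2r QG.
have E : (F (z + t *: v) + G (z + t *: v) - (F z + G z)) / t =
  (F (z + t *: v) - F z) / t + (G (z + t *: v) - G z) / t.
  by field; apply: lt0r_neq0.
rewrite E in Hq; lra.
Qed.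


Definition subadd (s : V -> R) := forall v w, s (v + w) <= s v + s w.
Definition homog (s : V -> R) := forall lam v, 0 < lam -> lam * s v <= s (lam *: v).

Lemma sub0_ge0 {s} : subadd s -> 0 <= s 0.
Proof. by move=> H; have := H 0 0; rewrite addr0; lra. Qed.

Lemma homog0 {s} : subadd s -> homog s -> s 0 = 0.
Proof.
move=> Hs Hh; have := sub0_ge0 Hs; have := Hh 2 0 (ltr0Sn _ 1); rewrite scaler0.
lra.
Qed.

Definition Wk (k : nat) (v : V) := forall i : 'I_d, (k <= i)%N -> v 0 i = 0.

Lemma Wk_add {k v w} : Wk k v -> Wk k w -> Wk k (v + w).
Proof. by move=> Hv Hw i ki; rewrite mxE Hv ?Hw ?addr0. Qed.
Lemma Wk_scale {k} c {v} : Wk k v -> Wk k (c *: v).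
Proof. by move=> Hv i ki; rewrite mxE Hv ?mulr0. Qed.
Lemma Wk_opp {k v} : Wk k v -> Wk k (- v).
Proof. by move=> Hv i ki; rewrite mxE Hv ?oppr0. Qed.

Lemma HB_k {s : V -> R} : subadd s -> homog s -> forall k,
  exists a : V, forall v, Wk k v -> dotv a v <= s v.
Proof.
move=> Hs Hh; elim=> [|k [a IH]].
  exists 0 => v Hv; have -> : v = 0 by apply/rowP => i; rewrite Hv ?mxE.
  by rewrite dotv0l; apply: sub0_ge0.
case: (ltnP k d) => kd; last first.
  exists a => v Hv; apply: IH => i ki; exfalso; move: (ltn_ord i).
  by rewrite ltnNge (leq_trans kd ki).
pose kk : 'I_d := Ordinal kd.
pose e : V := delta_mx 0 kk.
have key w1 w2 : Wk k w1 -> Wk k w2 -> dotv a w1 - s (w1 - e) <= s (w2 + e) - dotv a w2.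
  move=> H1 H2; have := IH _ (Wk_add H1 H2); rewrite dotvDr.
  have := Hs (w1 - e) (w2 + e); rewrite addrACA addNr addr0; lra.
have W0 : Wk k 0 by move=> i _; rewrite mxE.
pose A := [set x | exists2 w1, Wk k w1 & x = dotv a w1 - s (w1 - e)].
have hsA : has_sup A.
  split; first by exists (dotv a 0 - s (0 - e)), 0.
  by exists (s (0 + e) - dotv a 0) => x [w1 H1 ->]; apply: key.
pose g := sup A.
have gle w2 : Wk k w2 -> g <= s (w2 + e) - dotv a w2.
  move=> H2; apply: ge_sup; first by case: hsA.
  by move=> x [w1 H1 ->]; apply: key.
have gge w1 : Wk k w1 -> dotv a w1 - s (w1 - e) <= g.
  by move=> H1; apply: sup_upper_bound => //; exists w1.
exists (a + (g - a 0 kk) *: e) => v Hv.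
pose lam := v 0 kk.
pose w := v - lam *: e.
have Hw : Wk k w.
  move=> i ki; rewrite !mxE; case: (eqVneq i kk) => [->|ik].
    by rewrite /lam !eqxx mulr1 subrr.
  have ki' : (k < i)%N.
    rewrite ltn_neqAle ki andbT; apply/eqP => ki'; move/eqP: ik; apply.
    by apply: val_inj; rewrite /= -ki'.
  by rewrite Hv // andbF mulr0 subr0.
have ev : v = w + lam *: e by rewrite /w subrK.
have edot : dotv (a + (g - a 0 kk) *: e) v = dotv a w + lam * g.
  rewrite dotvDl dotvZl [dotv e v]dotvC dotv_delta {1}ev dotvDr dotvZr dotv_delta.
  rewrite -/lam; ring.
apply: (@le_trans _ _ (dotv a w + lam * g)); first by rewrite -edot.
clearbody w lam.
case: (ltgtP lam 0) => [ln|lp|l0].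
- pose mu := - lam.
  have mu0 : 0 < mu by rewrite /mu oppr_gt0.
  have := gge (mu^-1 *: w) (Wk_scale _ Hw).
  have := Hh mu (mu^-1 *: w - e) mu0.
  rewrite scalerDr scalerA mulfV ?gt_eqF // scale1r scalerN.
  rewrite dotvZr => H1 H2.
  have E : w - mu *: e = v by rewrite ev /mu scaleNr opprK.
  rewrite E in H1.
  have H3 : mu * (mu^-1 * dotv a w - s (mu^-1 *: w - e)) <= mu * g.
    by rewrite ler_pM2l.
  have H4 : mu * (mu^-1 * dotv a w - s (mu^-1 *: w - e)) =
     dotv a w - mu * s (mu^-1 *: w - e) by field; apply: lt0r_neq0.
  rewrite /mu in H3 H4 H1 *; lra.
- have := gle (lam^-1 *: w) (Wk_scale _ Hw).
  have := Hh lam (lam^-1 *: w + e) lp.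
  rewrite scalerDr scalerA mulfV ?gt_eqF // scale1r -ev dotvZr => H1 H2.
  have H3 : lam * g <= lam * (s (lam^-1 *: w + e) - lam^-1 * dotv a w).
    by rewrite ler_pM2l.
  have H4 : lam * (s (lam^-1 *: w + e) - lam^-1 * dotv a w) =
     lam * s (lam^-1 *: w + e) - dotv a w by field; apply: lt0r_neq0.
  lra.
- have -> : v = w by rewrite ev l0 scale0r addr0.
  by rewrite l0 mul0r addr0; apply: IH.
Qed.

Lemma HB0 {s : V -> R} : subadd s -> homog s -> exists a : V, forall v, dotv a v <= s v.
Proof.
move=> Hs Hh; have [a Ha] := HB_k Hs Hh d; exists a => v; apply: Ha => i di.
by exfalso; move: (ltn_ord i); rewrite ltnNge di.
Qed.

Section Sandwich.
Variables (p q : V -> R) (u : V).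
Hypotheses (ps : subadd p) (ph : homog p) (qs : subadd q) (qh : homog q).
Hypothesis Hpq : forall v, dotv u v <= p v + q v.

Definition term v w := p (v + w) + q w - dotv u w.
Definition Tset v : set R := [set x | exists w, x = term v w].
Definition sfun v := inf (Tset v).

Lemma term_lb v w : - p (- v) <= term v w.
Proof.
rewrite /term; have := Hpq w; have := ps (v + w) (- v); rewrite addrAC subrr add0r.
lra.
Qed.

Lemma T_hasinf v : has_inf (Tset v).
Proof. by split; [exists (term v 0), 0 | exists (- p (- v)) => x [w ->]; apply: term_lb]. Qed.

Lemma s_le v w : sfun v <= term v w.
Proof. by apply: ge_inf; [case: (T_hasinf v) | exists w]. Qed.

Lemma s_adh v {e} : 0 < e -> exists w, term v w < sfun v + e.
Proof. by move=> e0; have [x [w ->] H] := inf_adherent e0 (T_hasinf v); exists w. Qed.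

Lemma s_subadd : subadd sfun.
Proof.
move=> v1 v2; apply/ler_addgt0Pr => e e0.
have e2 : 0 < e / 2 by rewrite divr_gt0.
have [w1 H1] := s_adh v1 e2; have [w2 H2] := s_adh v2 e2.
have H := s_le (v1 + v2) (w1 + w2); rewrite /term in H1 H2 H.
have := ps (v1 + w1) (v2 + w2); have := qs w1 w2.
have -> : v1 + w1 + (v2 + w2) = v1 + v2 + (w1 + w2).
  by rewrite addrACA.
rewrite dotvDr in H; lra.
Qed.

Lemma s_homog : homog sfun.
Proof.
move=> lam v l0; apply: lb_le_inf; first by case: (T_hasinf (lam *: v)) .
move=> x [w ->]; rewrite /term.
have H := s_le v (lam^-1 *: w); rewrite /term in H.
have := ph lam (v + lam^-1 *: w) l0; have := qh lam (lam^-1 *: w) l0.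
rewrite scalerDr !scalerA mulfV ?gt_eqF // !scale1r => H1 H2; rewrite dotvZr in H.
have H3 : lam * sfun v <= lam * (p (v + lam^-1 *: w) + q (lam^-1 *: w) - lam^-1 * dotv u w).
  by rewrite ler_pM2l.
have H4 : lam * (p (v + lam^-1 *: w) + q (lam^-1 *: w) - lam^-1 * dotv u w) =
  lam * p (v + lam^-1 *: w) + lam * q (lam^-1 *: w) - dotv u w by field; apply: lt0r_neq0.
lra.
Qed.

Lemma sandwich : exists a, (forall v, dotv a v <= p v) /\ (forall v, dotv (u - a) v <= q v).
Proof.
have [a Ha] := HB0 s_subadd s_homog.
exists a; split => v.
  apply: (le_trans (Ha v)); apply: (le_trans (s_le v 0)).
  by rewrite /term addr0 homog0 // dotv0r; lra.
have := le_trans (Ha (- v)) (s_le (- v) v); rewrite /term addNr homog0 // dotvNr dotvBl.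
lra.
Qed.

End Sandwich.


Definition eta (k : nat) : R := (k.+1%:R)^-1.

Lemma eta_gt0 k : 0 < eta k.
Proof. by rewrite invr_gt0 ltr0n. Qed.

Lemma eta_small {e : R} : 0 < e -> exists N, forall k, (N <= k)%N -> eta k < e.
Proof.
move=> e0; exists (Num.bound (e^-1)) => k Nk.
have H0 : 0 < e^-1 by rewrite invr_gt0.
have H := archi_boundP (ltW H0).
rewrite /eta -[e]invrK ltf_pV2 ?posrE ?invr_gt0 ?ltr0n //.
apply: (lt_le_trans H); rewrite ler_nat; exact: leq_trans Nk _.
Qed.

Lemma a_bound C F y r L a : LipAt C F y r L -> clarke_subdiff C F y a -> `|a| <= L.
Proof.
move=> HL Ha; have [_ L0 _ _] := HL.
apply: norm_le_coord => // i; rewrite ler_norml; apply/andP; split.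
  have := char1 HL a (- delta_mx 0 i) Ha; have := fo_ub HL (- delta_mx 0 i).
  rewrite dotvNr dotv_delta normrN => H1 H2.
  have : L * `|delta_mx 0 i : V| <= L by rewrite -[leRHS]mulr1; apply: ler_wpM2l => //; apply: norm_delta.
  lra.
have := char1 HL a (delta_mx 0 i) Ha; have := fo_ub HL (delta_mx 0 i).
rewrite dotv_delta => H1 H2.
have : L * `|delta_mx 0 i : V| <= L by rewrite -[leRHS]mulr1; apply: ler_wpM2l => //; apply: norm_delta.
lra.
Qed.

Lemma decomp C F G y r L1 L2 u : LipAt C F y r L1 -> LipAt C G y r L2 ->
  clarke_subdiff C (fun x => F x + G x) y u ->
  exists a, clarke_subdiff C F y a /\ clarke_subdiff C G y (u - a).
Proof.
move=> HF HG Hu; have Cy := Hu.1.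
have [a [Ha1 Ha2]] := sandwich (fo C F y r) (fo C G y r) u (fo_subadd HF) (fo_homog HF) (fo_subadd HG) (fo_homog HG)
  (sum_rule _ _ _ _ _ _ _ _ HF HG Hu).
by exists a; split; [apply: (char2 HF) | apply: (char2 HG)].
Qed.

Lemma WR_unif (C : V -> Prop) F x : weakly_regular_value C F 0 -> C x -> F x = 0 ->
  exists m, exists del, [/\ 0 < m, 0 < del & forall y a, C y -> enorm (y - x) < del ->
    0 < F y -> clarke_subdiff C F y a -> m <= enorm a].
Proof.
move=> WR Cx Fx; apply: contrapT => H.
have step n : exists ya : V * V, [/\ C ya.1, enorm (ya.1 - x) < eta n, 0 < F ya.1,
    clarke_subdiff C F ya.1 ya.2 & enorm ya.2 < eta n].
  apply: contrapT => Hn; apply: H; exists (eta n), (eta n); split; try exact: eta_gt0.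
  move=> y a Cy yx Fy Ha; rewrite leNgt; apply/negP => lt; apply: Hn.
  by exists (y, a); split.
have [YA HYA] := choice step.
have := WR (fun i => (YA i).1) x (fun i => (YA i).2) Cx.
case => //.
- by move=> i; case: (HYA i).
- move=> e e0; have [N HN] := eta_small e0; exists N => i Ni.
  by case: (HYA i) => _ H1 _ _ _; apply: lt_trans H1 (HN _ Ni).
- by move=> i; case: (HYA i).
- by move=> i; case: (HYA i).
move=> m m0 [N HN]; have [N' HN'] := eta_small m0.
have := HN (maxn N N') (leq_maxl _ _); case: (HYA (maxn N N')) => _ _ _ _ H1.
have := HN' (maxn N N') (leq_maxr _ _); lra.
Qed.

Lemma cluster_pt (A : nat -> V) L : (forall k, `|A k| <= L) ->
  exists p, forall e, 0 < e -> forall K, exists k, (K <= k)%N /\ `|A k - p| < e.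
Proof.
move=> HA.
pose S := [set v : V | forall i, `[- L, L]%classic (v ord0 i)].
have cS : compact S.
  by apply: (@rV_compact _ _ (fun=> `[- L, L]%classic)) => _; apply: segment_compact.
have FS : (A @ \oo) S.
  exists 0%N => // k _ /= i; rewrite /= in_itv /= -ler_norml.
  by apply: le_trans (HA k); have := coord_le_norm (A k) i.
have [p [Sp Cp]] := cS _ (fmap_proper_filter A eventually_filter) FS.
exists p => e e0 K.
have FB : (A @ \oo) [set v | exists2 k, (K <= k)%N & v = A k].
  by exists K => // k /= Kk; exists k.
have [v [[k Kk ->] Bk]] := Cp _ _ FB (nbhsx_ballx p e e0).
exists k; split => //; rewrite distrC; move: Bk; rewrite -ball_normE.
by [].
Qed.

Lemma clarke_closed (C : V -> Prop) F x p (X A : nat -> V) : C x ->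
  (forall k, clarke_subdiff C F (X k) (A k)) ->
  (forall e, 0 < e -> exists k, enorm (X k - x) < e /\ `|A k - p| < e) ->
  clarke_subdiff C F x p.
Proof.
move=> Cx HXA Hc; split => // v eps del e0 d0.
have D0 := D_gt0; have nv := normr_ge0 v.
pose c := D * (1 + `|v|).
have c0 : 0 < c by rewrite mulr_gt0 //; lra.
pose e1 := Num.min (del / (2 * D)) (eps / (2 * c)).
have e10 : 0 < e1 by rewrite lt_min !divr_gt0 // mulr_gt0.
have e1a : e1 <= del / (2 * D) by rewrite ge_min lexx.
have e1b : e1 <= eps / (2 * c) by rewrite ge_min lexx orbT.
have [k [Xk Ak]] := Hc e1 e10.
have dd : 0 < del / (2 * D) by rewrite divr_gt0 // mulr_gt0.
have e2 : 0 < eps / 2 by rewrite divr_gt0.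
have [z [t [Cz zX t0 td Hq]]] := (HXA k).2 v (eps / 2) (del / (2 * D)) e2 dd.
exists z, t; split => //.
- apply: (le_lt_trans (enorm_le_norm _)).
  have H1 : `|z - x| <= enorm (z - X k) + enorm (X k - x).
    rewrite -(subrKA (X k)) (le_trans (ler_normD _ _)) //.
    by apply: lerD; apply: norm_le_enorm.
  have H2 : D * `|z - x| <= D * (enorm (z - X k) + enorm (X k - x)) by rewrite ler_pM2l.
  have H3 : D * (enorm (z - X k) + enorm (X k - x)) < D * (del / (2 * D) + del / (2 * D)).
    by rewrite ltr_pM2l //; apply: ltr_leD => //; apply: ltW; apply: lt_le_trans Xk e1a.
  have H4 : D * (del / (2 * D) + del / (2 * D)) = del.
    by field; rewrite nat1r pnatr_eq0.
  by rewrite -[X in _ < X]H4; apply: le_lt_trans H2 H3.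
- have : del / (2 * D) <= del.
    by rewrite ler_pdivrMr ?mulr_gt0 // ler_peMr ?(ltW d0) //; have := D_ge1; lra.
  move=> H; exact: lt_le_trans td H.
- have H1 := dotv_bound (A k - p) v.
  have H2 : D * (`|A k - p| * `|v|) <= D * (e1 * `|v|).
    by rewrite ler_pM2l //; apply: ler_wpM2r => //; apply: ltW.
  have H3 : D * (e1 * `|v|) <= D * (eps / (2 * c) * `|v|).
    by rewrite ler_pM2l //; apply: ler_wpM2r.
  have H4 : D * (eps / (2 * c) * `|v|) = eps / 2 * (`|v| / (1 + `|v|)).
    by rewrite /c; field; apply/andP; split; [apply: lt0r_neq0; lra | rewrite nat1r pnatr_eq0].
  have H5 : `|v| / (1 + `|v|) <= 1 by rewrite ler_pdivrMr; lra.
  have H6 : eps / 2 * (`|v| / (1 + `|v|)) <= eps / 2 by rewrite -[leRHS]mulr1; apply: ler_wpM2l => //; apply: ltW.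
  move: H1; rewrite dotvBl ler_norml => /andP[H7 H8].
  lra.
Qed.


Lemma main_aux (C : V -> Prop) (f g : V -> R) :
  is_open C -> is_convex C ->
  (forall x, C x -> 0 <= f x) -> (forall x, C x -> 0 <= g x) ->
  DC C f -> DC C g ->
  weakly_regular_value C f 0 -> weakly_regular_value C g 0 ->
  ~ touch_weakly C f g ->
  DC C (fun x => f x + g x) /\ weakly_regular_value C (fun x => f x + g x) 0.
Proof.
move=> Co Cc f0 g0 DCf DCg WRf WRg NT; split.
  case: (DCf) => [g1 [h1 [c1 c2 e1]]]; case: (DCg) => [g2 [h2 [c3 c4 e2]]].
  exists (fun x => g1 x + g2 x), (fun x => h1 x + h2 x); split.
  - move=> x y t Cx Cy t0 t1; have := c1 x y t Cx Cy t0 t1; have := c3 x y t Cx Cy t0 t1.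
    rewrite !mulrDr; lra.
  - move=> x y t Cx Cy t0 t1; have := c2 x y t Cx Cy t0 t1; have := c4 x y t Cx Cy t0 t1.
    rewrite !mulrDr; lra.
  - by move=> x Cx; rewrite e1 // e2 //; ring.
move=> xs x us Cx Cxs cvg pos fgx sub.
have fx : f x = 0 by have := f0 x Cx; have := g0 x Cx; lra.
have gx : g x = 0 by have := f0 x Cx; have := g0 x Cx; lra.
have [r1 [L1 Lf]] := DC_lip _ _ _ Co DCf Cx.
have [r2 [L2 Lg]] := DC_lip _ _ _ Co DCg Cx.
pose r := Num.min r1 r2.
have r0 : 0 < r by rewrite lt_min; case: Lf => -> *; case: Lg => -> *.
have mr1 : r <= r1 by rewrite ge_min lexx.
have mr2 : r <= r2 by rewrite ge_min lexx orbT.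
have Lf' := LipAt_shrink _ _ _ _ _ _ Lf r0 mr1.
have Lg' := LipAt_shrink _ _ _ _ _ _ Lg r0 mr2.
have [mf [df [mf0 df0 Uf]]] := WR_unif _ _ _ WRf Cx fx.
have [mg [dg [mg0 dg0 Ug]]] := WR_unif _ _ _ WRg Cx gx.
case: (pselect (liminf_pos (fun i => enorm (us i)))) => // NL; exfalso.
have small m N : 0 < m -> exists i, (N <= i)%N /\ enorm (us i) < m.
  move=> m0; apply: contrapT => H; apply: NL; exists m => //; exists N => i Ni.
  rewrite leNgt; apply/negP => lt; apply: H; by exists i.
have r20 : 0 < r / 2 by rewrite divr_gt0.
have step k : exists ia : nat * V, [/\ enorm (us ia.1) < eta k,
    enorm (xs ia.1 - x) < eta k /\ `|xs ia.1 - x| < r / 2,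
    clarke_subdiff C f (xs ia.1) ia.2 & clarke_subdiff C g (xs ia.1) (us ia.1 - ia.2)].
  have e0 : 0 < Num.min (eta k) (r / 2) by rewrite lt_min eta_gt0.
  have [N HN] := cvg _ e0.
  have [i [Ni Hi]] := small (eta k) N (eta_gt0 k).
  have := HN i Ni; rewrite lt_min => /andP[Hx1 Hx2].
  have Hx3 : `|xs i - x| < r / 2 by apply: le_lt_trans (norm_le_enorm _) Hx2.
  have [a [Ha Hb]] := decomp _ _ _ _ _ _ _ _ (LipAt_shift _ _ _ _ _ _ Lf' Hx3) (LipAt_shift _ _ _ _ _ _ Lg' Hx3) (sub i).
  by exists (i, a); split.
have [IA HIA] := choice step.
have bound k : `|(IA k).2| <= L1.
  by case: (HIA k) => _ [_ H] Ha _; apply: (a_bound _ _ _ _ _ _ (LipAt_shift _ _ _ _ _ _ Lf' H) Ha).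
have [p Hp] := cluster_pt _ _ bound.
have close e : 0 < e -> exists k, eta k < e /\ `|(IA k).2 - p| < e.
  move=> e0; have [K HK] := eta_small e0; have [k [Kk Hk]] := Hp e e0 K.
  by exists k; split => //; apply: HK.
have D0 := D_gt0.
case: (eqVneq p 0) => [p0 | pn0].
  pose m := Num.min mf mg.
  have m0 : 0 < m by rewrite lt_min mf0.
  have mmf : m <= mf by rewrite ge_min lexx.
  have mmg : m <= mg by rewrite ge_min lexx orbT.
  pose eps := Num.min (Num.min df dg) (m / (2 * D)).
  have eps0 : 0 < eps by rewrite !lt_min df0 dg0 divr_gt0 // mulr_gt0.
  have edf : eps <= df by rewrite !ge_min lexx.
  have edg : eps <= dg by rewrite !ge_min lexx orbT.
  have em : eps <= m / (2 * D) by rewrite ge_min lexx orbT.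
  have [k [etak Hk]] := close eps eps0.
  case: (HIA k) => Hu [Hx _] Ha Hb.
  rewrite p0 subr0 in Hk.
  set y := xs (IA k).1 in Hx Ha Hb; set a := (IA k).2 in Ha Hb Hk.
  set uu := us (IA k).1 in Hu Hb.
  have Cy : C y := Cxs _.
  have ea : enorm a <= D * `|a| := enorm_le_norm a.
  have eq1 : D * (m / (2 * D)) = m / 2 by field; rewrite nat1r pnatr_eq0.
  have ea2 : D * `|a| < D * (m / (2 * D)).
    by rewrite ltr_pM2l //; apply: lt_le_trans Hk em.
  have posy : 0 < f y + g y := pos (IA k).1.
  case: (ltrP 0 (f y)) => fy.
    have := Uf y a Cy (lt_le_trans (lt_trans Hx etak) edf) fy Ha.
    rewrite eq1 in ea2; lra.
  have gy : 0 < g y by have := f0 y Cy; lra.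
  have := Ug y (uu - a) Cy (lt_le_trans (lt_trans Hx etak) edg) gy Hb.
  have eb : enorm (uu - a) <= D * `|uu - a| := enorm_le_norm _.
  have nb : `|uu - a| <= enorm uu + `|a|.
    by apply: (le_trans (ler_normB _ _)); rewrite lerD2r; apply: norm_le_enorm.
  have nb2 : D * `|uu - a| <= D * (enorm uu + `|a|) by rewrite ler_pM2l.
  have nb3 : D * (enorm uu + `|a|) < D * (m / (2 * D) + m / (2 * D)).
    rewrite ltr_pM2l //; apply: ltr_leD.
      by apply: lt_le_trans em; apply: lt_trans Hu etak.
    by apply: ltW; apply: lt_le_trans Hk em.
  have eq2 : D * (m / (2 * D) + m / (2 * D)) = m by field; rewrite nat1r pnatr_eq0.
  rewrite eq2 in nb3; lra.
apply: NT; exists x, ((enorm p)^-1 *: p); split.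
  split => //; split => //; exists p; split => //.
  apply: (@clarke_closed _ _ x p (fun k => xs (IA k).1) (fun k => (IA k).2)) => //.
    by move=> k; case: (HIA k).
  move=> e e0; have [k [ek Hk]] := close e e0; exists k; split => //.
  by case: (HIA k) => _ [H _] _ _; apply: lt_trans H ek.
split => //; split => //; exists (- p); split.
- by rewrite oppr_eq0.
- apply: (@clarke_closed _ _ x (- p) (fun k => xs (IA k).1)
     (fun k => us (IA k).1 - (IA k).2)) => //.
    by move=> k; case: (HIA k).
  move=> e e0; have e20 : 0 < e / 2 by rewrite divr_gt0.
  have [k [ek Hk]] := close (e / 2) e20; exists k; split.
    by case: (HIA k) => _ [H _] _ _; apply: lt_trans H (lt_trans ek _); lra.
  case: (HIA k) => Hu _ _ _ /=.
  have E : us (IA k).1 - (IA k).2 - - p = us (IA k).1 - ((IA k).2 - p).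
    by apply/rowP => i; rewrite !mxE; ring.
  rewrite E; apply: (le_lt_trans (ler_normB _ _)).
  have := norm_le_enorm (us (IA k).1); lra.
- by rewrite enormN scalerN.
Qed.

End Basics.

Theorem lemma2p14 (R : realType) (d : nat) (C : 'rV[R]_d -> Prop)
    (f g : 'rV[R]_d -> R) :
  is_open C -> is_convex C ->
  (forall x, C x -> 0 <= f x) -> (forall x, C x -> 0 <= g x) ->
  DC C f -> DC C g ->
  weakly_regular_value C f 0 -> weakly_regular_value C g 0 ->
  ~ touch_weakly C f g ->
  DC C (fun x => f x + g x) /\ weakly_regular_value C (fun x => f x + g x) 0.
Proof. exact: main_aux. Qed.
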